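(* Let $\mathcal{P}$ be a nonempty finite poset with $n=|\mathcal{P}|$, let $m=\max_{p\in\mathcal{P}}(|{\downarrow}p|+|{\uparrow}p|)$, and let $\mathcal{A},\mathcal{B}$ be dual families of downsets over $\mathcal{L}(\mathcal{P})$. Then $$\sum_{A\in\mathcal{A}}(3/4)^{|A|/m^2}+\sum_{B\in\mathcal{B}}e^{-(n-|B|)/m}\ \ge\ 1.$$
   Context: For a finite poset $\mathcal{P}$, $\mathcal{L}(\mathcal{P})$ is the lattice of all downsets of $\mathcal{P}$ ordered by inclusion. ${\downarrow}p=\{q:q\le p\}$, ${\uparrow}p=\{q:q\ge p\}$ (both contain $p$, so $m\ge2$). Two families $\mathcal{A},\mathcal{B}$ of downsets of $\mathcal{P}$ are dual over $\mathcal{L}(\mathcal{P})$ if $A\not\subseteq B$ for all $A\in\mathcal{A},B\in\mathcal{B}$, and for every downset $X$ of $\mathcal{P}$ either $X\subseteq B$ for some $B\in\mathcal{B}$ or $A\subseteq X$ for some $A\in\mathcal{A}$. *)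

(* Defs.v *)
From mathcomp Require Import all_boot.
From Stdlib Require Import Reals.
Set Implicit Arguments. Unset Strict Implicit. Unset Printing Implicit Defensive.

Definition is_partial_order (T : finType) (le : rel T) : Prop :=
  [/\ reflexive le, antisymmetric le & transitive le].

Definition downset (T : finType) (le : rel T) (X : {set T}) : Prop :=
  forall x y : T, le y x -> x \in X -> y \in X.

Definition downp (T : finType) (le : rel T) (p : T) : {set T} := [set q | le q p].
Definition upp (T : finType) (le : rel T) (p : T) : {set T} := [set q | le p q].

Definition mpar (T : finType) (le : rel T) : nat :=
  \max_(p : T) (#|downp le p| + #|upp le p|)%N.

Definition dual_families (T : finType) (le : rel T) (FA FB : {set {set T}}) : Prop :=
  (forall A B, A \in FA -> B \in FB -> ~ (A \subset B)) /\
  (forall X : {set T}, downset le X ->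
     (exists2 B, B \in FB & X \subset B) \/ (exists2 A, A \in FA & A \subset X)).

Definition rsum (T : finType) (F : {set {set T}}) (f : {set T} -> R) : R :=
  \big[Rplus/0%R]_(A in F) f A.

(* Main.v *)
From HB Require Import structures.
Require Import Defs.
From mathcomp Require Import all_boot.
From Stdlib Require Import Reals Lra Lia.
From mathcomp Require Import zify.
Set Implicit Arguments. Unset Strict Implicit. Unset Printing Implicit Defensive.

HB.instance Definition _ := Monoid.isComLaw.Build R 0%R Rplus (fun x y z => esym (Rplus_assoc x y z)) Rplus_comm Rplus_0_l.
HB.instance Definition _ := Monoid.isComLaw.Build R 1%R Rmult (fun x y z => esym (Rmult_assoc x y z)) Rmult_comm Rmult_1_l.
Lemma Rm0l : left_zero 0%R Rmult. Proof. move=> x; ring. Qed.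
Lemma Rm0r : right_zero 0%R Rmult. Proof. move=> x; ring. Qed.
HB.instance Definition _ := Monoid.isMulLaw.Build R 0%R Rmult Rm0l Rm0r.
Lemma RDl : left_distributive Rmult Rplus. Proof. move=> x y z; ring. Qed.
Lemma RDr : right_distributive Rmult Rplus. Proof. move=> x y z; ring. Qed.
HB.instance Definition _ := Monoid.isAddLaw.Build R Rmult Rplus RDl RDr.

Definition ind (b : bool) : R := if b then 1%R else 0%R.
Definition wt (T : finType) (p : R) (S : {set T}) : R :=
  \big[Rmult/1%R]_(x : T) (if x \in S then p else 1 - p)%R.
Definition Ex (T : finType) (p : R) (F : {set T} -> R) : R :=
  \big[Rplus/0%R]_(S : {set T}) (wt p S * F S)%R.

Lemma Ex_prod (T : finType) p (g : T -> bool -> R) :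
  Ex p (fun S => \big[Rmult/1%R]_x g x (x \in S)) =
  \big[Rmult/1%R]_x (p * g x true + (1 - p) * g x false)%R.
Proof.
rewrite (eq_bigr (fun x => \big[Rplus/0%R]_(b : bool) ((if b then p else 1 - p) * g x b)%R)); last first.
  by move=> x _; rewrite big_bool.
rewrite bigA_distr_bigA /Ex.
rewrite (reindex (fun S : {set T} => [ffun x => x \in S])); last first.
  exists (fun f : {ffun T -> bool} => [set x | f x]) => [S _|f _].
    by apply/setP => x; rewrite inE ffunE.
  by apply/ffunP => x; rewrite ffunE inE.
apply: eq_bigr => S _; rewrite /wt -big_split /=.
by apply: eq_bigr => x _; rewrite ffunE.
Qed.

Lemma Ex_ext (T : finType) p (F G : {set T} -> R) :
  (forall S, F S = G S) -> Ex p F = Ex p G.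
Proof. by move=> H; apply: eq_bigr => S _; rewrite H. Qed.

Lemma Ex_add (T : finType) p (F G : {set T} -> R) :
  Ex p (fun S => F S + G S)%R = (Ex p F + Ex p G)%R.
Proof. rewrite /Ex -big_split; apply: eq_bigr => S _ /=; ring. Qed.

Lemma Ex_sub (T : finType) p (F G : {set T} -> R) :
  Ex p (fun S => F S - G S)%R = (Ex p F - Ex p G)%R.
Proof.
have -> : Ex p F = Ex p (fun S => (F S - G S) + G S)%R by apply: Ex_ext => S; ring.
rewrite Ex_add; ring.
Qed.

Lemma Ex_sum (T : finType) p (I : finType) (P : pred I) (G : I -> {set T} -> R) :
  Ex p (fun S => \big[Rplus/0%R]_(i | P i) G i S) = \big[Rplus/0%R]_(i | P i) Ex p (G i).
Proof.
rewrite /Ex (eq_bigr (fun S => \big[Rplus/0%R]_(i | P i) (wt p S * G i S)%R)).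
  exact: exchange_big.
by move=> S _; rewrite big_distrr.
Qed.

Lemma wt_ge0 (T : finType) p (S : {set T}) : (0 <= p <= 1)%R -> (0 <= wt p S)%R.
Proof.
move=> Hp; apply: (big_ind (fun x => 0 <= x)%R); first lra.
  by move=> x y; apply: Rmult_le_pos.
by move=> x _; case: (x \in S); lra.
Qed.

Lemma Ex_le (T : finType) p (F G : {set T} -> R) : (0 <= p <= 1)%R ->
  (forall S, F S <= G S)%R -> (Ex p F <= Ex p G)%R.
Proof.
move=> Hp H; apply: (big_ind2 (fun x y => x <= y)%R); first lra.
  by move=> *; apply: Rplus_le_compat.
by move=> S _; apply: Rmult_le_compat_l; [apply: wt_ge0|apply: H].
Qed.

Lemma iter_pow (c : R) n : iter n (Rmult c) 1%R = (c ^ n)%R.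
Proof. by elim: n => //= n ->. Qed.

Lemma Ex_avoid (T : finType) p (V : {set T}) :
  Ex p (fun S => ind [disjoint S & V]) = ((1 - p) ^ #|V|)%R.
Proof.
have -> : Ex p (fun S => ind [disjoint S & V]) =
   Ex p (fun S => \big[Rmult/1%R]_x (fun x b => if b && (x \in V) then 0%R else 1%R) x (x \in S)).
  apply: Ex_ext => S /=; case: (boolP [disjoint S & V]) => H /=.
    rewrite big1 // => x _; case Hx: (x \in S) => //=.
    by rewrite (disjointFr H Hx).
  move: H; rewrite -setI_eq0 => /set0Pn [x]; rewrite inE => /andP [H1 H2].
  by rewrite (bigD1 x) //= H1 H2 /= Rmult_0_l.
rewrite (Ex_prod _ (fun x b => if b && (x \in V) then 0%R else 1%R)).
rewrite (eq_bigr (fun x => if x \in V then (1 - p)%R else 1%R)); last first.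
  by move=> x _ /=; case: (x \in V) => /=; ring.
by rewrite -big_mkcond big_const iter_pow.
Qed.
Lemma ind_and a b : ind (a && b) = (ind a * ind b)%R.
Proof. by case: a; case: b => /=; rewrite /ind; ring. Qed.

Lemma disjoint_setU (T : finType) (S V W : {set T}) :
  [disjoint S & V :|: W] = [disjoint S & V] && [disjoint S & W].
Proof.
rewrite -!setI_eq0 setIUr; apply/eqP/andP.
  move=> H; split; apply/eqP/setP => x; move/setP: H => /(_ x); rewrite !inE; 
  by case: (x \in S); case: (x \in V); case: (x \in W).
case=> /eqP/setP H1 /eqP/setP H2; apply/setP => x; move: (H1 x) (H2 x); rewrite !inE.
by case: (x \in S); case: (x \in V); case: (x \in W).
Qed.

Lemma card_disjU (T : finType) (V W : {set T}) : [disjoint V & W] -> #|V :|: W| = #|V| + #|W|.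
Proof. by move=> H; rewrite cardsU (disjoint_setI0 H) cards0 subn0. Qed.

Lemma Ex_blocks (T : finType) p (U : T -> {set T}) (s : seq T) : forall V : {set T},
  pairwise (fun a b => [disjoint U a & U b]) s ->
  (forall a, a \in s -> [disjoint V & U a]) ->
  Ex p (fun S => ind [disjoint S & V] * \big[Rmult/1%R]_(a <- s) (1 - ind [disjoint S & U a]))%R
  = ((1 - p) ^ #|V| * \big[Rmult/1%R]_(a <- s) (1 - (1 - p) ^ #|U a|))%R.
Proof.
elim: s => [|a s IH] V Hpw HV.
  rewrite big_nil Rmult_1_r -Ex_avoid; apply: Ex_ext => S; rewrite big_nil; ring.
move: Hpw; rewrite pairwise_cons => /andP [Hall Hpw].
have HVa : [disjoint V & U a] by apply: HV; rewrite inE eqxx.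
rewrite (@Ex_ext _ p _ (fun S => ind [disjoint S & V] * \big[Rmult/1%R]_(b <- s) (1 - ind [disjoint S & U b])
   - ind [disjoint S & V :|: U a] * \big[Rmult/1%R]_(b <- s) (1 - ind [disjoint S & U b]))%R); last first.
  by move=> S; rewrite big_cons disjoint_setU ind_and; ring.
rewrite Ex_sub IH //; last by move=> b Hb; apply: HV; rewrite inE Hb orbT.
rewrite IH //; last first.
  move=> b Hb; rewrite disjoint_sym disjoint_setU !(disjoint_sym (U b)).
  by rewrite HV ?inE ?Hb ?orbT //= (allP Hall).
by rewrite big_cons card_disjU // pow_add; ring.
Qed.
Lemma greedy (T : finType) (U : T -> {set T}) (K : nat) :
  (forall a, a \in U a) ->
  (forall a, #|[set b | ~~ [disjoint U a & U b]]| <= K) ->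
  forall A : {set T}, exists s : seq T, [/\ {subset s <= A},
     pairwise (fun a b => [disjoint U a & U b]) s & #|A| <= size s * K].
Proof.
move=> HU HK A.
elim: {A}_.+1 {-2}A (ltnSn #|A|) => // n IH A HA.
case: (set_0Vmem A) => [->|[a Ha]].
  by exists [::]; split => //; rewrite cards0.
set N := [set b | ~~ [disjoint U a & U b]].
have HaN : a \in A :&: N.
  rewrite !inE Ha /= -setI_eq0; apply/set0Pn; exists a; by rewrite inE HU.
have H1 := cardsID N A.
have H2 : 0 < #|A :&: N| by apply/card_gt0P; exists a.
have H3 : #|A :&: N| <= K by apply: leq_trans (HK a); apply: subset_leq_card; apply: subsetIr.
have [s [Hs1 Hs2 Hs3]] : exists s : seq T, [/\ {subset s <= A :\: N},
     pairwise (fun a b => [disjoint U a & U b]) s & #|A :\: N| <= size s * K].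
  by apply: IH; lia.
exists (a :: s); split.
- move=> x; rewrite inE => /orP [/eqP ->//|/Hs1]; by rewrite inE => /andP [].
- rewrite pairwise_cons Hs2 andbT; apply/allP => b /Hs1; rewrite !inE => /andP [].
  by rewrite negbK.
- rewrite /= mulSn; lia.
Qed.

Lemma card_bigcup_le (T I : finType) (P : pred I) (F : I -> {set T}) :
  #|\bigcup_(i | P i) F i| <= \sum_(i | P i) #|F i|.
Proof.
apply: (big_ind2 (fun (A : {set T}) (n : nat) => #|A| <= n)); first by rewrite cards0.
  move=> A1 n1 A2 n2 h1 h2; rewrite cardsU; lia.
by [].
Qed.
Lemma exp_pow x n : (exp x ^ n = exp (INR n * x))%R.
Proof.
elim: n => [|n IH]; first by rewrite /= Rmult_0_l exp_0.
have -> : (exp x ^ n.+1 = exp x * exp x ^ n)%R by [].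
rewrite IH S_INR -exp_plus; f_equal; ring.
Qed.

Lemma exp_le x y : (x <= y)%R -> (exp x <= exp y)%R.
Proof. case=> [H|->]; [left; exact: exp_increasing|lra]. Qed.

Lemma q_pow_bound (m : nat) : 2 <= m -> (1/3 <= (1 - / INR m) ^ (m - 1))%R.
Proof.
move=> Hm.
have Hk : (1 <= INR (m - 1))%R by apply: (le_INR 1); apply/leP; lia.
have HmE : INR m = (INR (m - 1) + 1)%R by rewrite -S_INR; f_equal; lia.
set k := (m - 1) in Hk HmE *.
set a := (1 + / INR k)%R.
have Ha0 : (0 <= a)%R.
  by rewrite /a; have := Rinv_0_lt_compat (INR k); lra.
have Hak : (a ^ k <= 3)%R.
  apply: Rle_trans (_ : exp (/ INR k) ^ k <= 3)%R.
    apply: pow_incr; split => //; rewrite /a; have := exp_ineq1_le (/ INR k); lra.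
  rewrite exp_pow Rinv_r; [exact: exp_le_3|lra].
have Hqa : ((1 - / INR m) * a = 1)%R by rewrite /a HmE; field; lra.
have Hq0 : (0 <= 1 - / INR m)%R.
  rewrite HmE; have : (/ (INR k + 1) <= 1)%R.
    rewrite -Rinv_1; apply: Rinv_le_contravar; lra.
  lra.
have H1 : ((1 - / INR m) ^ k * a ^ k = 1)%R by rewrite -Rpow_mult_distr Hqa pow1.
have H2 : (0 <= (1 - / INR m) ^ k)%R by apply: pow_le.
have H3 : (0 <= a ^ k)%R by apply: pow_le.
nra.
Qed.

Lemma pow_anti (q : R) j k : (0 <= q <= 1)%R -> j <= k -> (q ^ k <= q ^ j)%R.
Proof.
move=> Hq Hjk; rewrite -(subnKC Hjk) -plusE pow_add.
have H1 : (q ^ (k - j) <= 1)%R by rewrite -(pow1 (k - j)); apply: pow_incr.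
have H2 : (0 <= q ^ j)%R by apply: pow_le; lra.
have H3 : (0 <= q ^ (k - j))%R by apply: pow_le; lra.
nra.
Qed.

Lemma prod_bound (T : eqType) (s : seq T) (f : T -> R) c :
  (forall a, a \in s -> 0 <= f a <= c)%R ->
  (0 <= \big[Rmult/1%R]_(a <- s) f a <= c ^ size s)%R.
Proof.
elim: s => [|a s IH] H; first by rewrite big_nil /=; lra.
rewrite big_cons /=.
have [H1 H2] := H a (mem_head a s).
have [H3 H4] : (0 <= \big[Rmult/1%R]_(a <- s) f a <= c ^ size s)%R.
  by apply: IH => b Hb; apply: H; rewrite inE Hb orbT.
split; [exact: Rmult_le_pos|].
by apply: Rmult_le_compat.
Qed.

Lemma sum_le (I : finType) (P : pred I) (f g : I -> R) :
  (forall i, P i -> f i <= g i)%R ->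
  (\big[Rplus/0%R]_(i | P i) f i <= \big[Rplus/0%R]_(i | P i) g i)%R.
Proof.
move=> H; apply: (big_ind2 (fun x y => x <= y)%R); first lra.
  by move=> *; apply: Rplus_le_compat.
exact: H.
Qed.

Lemma sum_ge0 (I : finType) (P : pred I) (f : I -> R) :
  (forall i, P i -> 0 <= f i)%R -> (0 <= \big[Rplus/0%R]_(i | P i) f i)%R.
Proof.
move=> H; apply: (big_ind (fun x => 0 <= x)%R); first lra.
  by move=> *; apply: Rplus_le_le_0_compat.
exact: H.
Qed.

Lemma ind_ge0 b : (0 <= ind b)%R.
Proof. by case: b; rewrite /ind; lra. Qed.

Lemma sum_ge1 (I : finType) (P : pred I) (f : I -> R) i0 :
  P i0 -> (1 <= f i0)%R -> (forall i, P i -> 0 <= f i)%R ->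
  (1 <= \big[Rplus/0%R]_(i | P i) f i)%R.
Proof.
move=> Hi0 H1 H; rewrite (bigD1 i0) //=.
have : (0 <= \big[Rplus/0%R]_(i | P i && (i != i0)) f i)%R.
  by apply: sum_ge0 => i /andP [Hi _]; apply: H.
lra.
Qed.
Theorem lemma4 (T : finType) (le : rel T) (FA FB : {set {set T}}) :
  is_partial_order le ->
  (0 < #|T|)%N ->
  (forall A, A \in FA -> downset le A) ->
  (forall B, B \in FB -> downset le B) ->
  dual_families le FA FB ->
  (rsum FA (fun A => Rpower (3 / 4) (INR #|A| / INR (mpar le ^ 2)))
   + rsum FB (fun B => exp (- (INR #|T| - INR #|B|) / INR (mpar le))) >= 1)%R.
Proof.
move=> [Hrefl _ Htrans] HT _ _ [_ Hdual].
set m := mpar le.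
have Hmx : forall x, #|downp le x| + #|upp le x| <= m.
  by move=> x; rewrite /m /mpar; exact: leq_bigmax.
have Hdn : forall x, 0 < #|downp le x| by move=> x; apply/card_gt0P; exists x; rewrite inE Hrefl.
have Hup : forall x, 0 < #|upp le x| by move=> x; apply/card_gt0P; exists x; rewrite inE Hrefl.
have Hm2 : 2 <= m.
  move/card_gt0P: HT => [x _]; have := Hmx x; have := Hdn x; have := Hup x; lia.
have HmR : (2 <= INR m)%R by apply: (le_INR 2); apply/leP.
set p := (/ INR m)%R.
have Hp : (0 <= p <= 1)%R.
  rewrite /p; split; first by left; apply: Rinv_0_lt_compat; lra.
  rewrite -Rinv_1; apply: Rinv_le_contravar; lra.
set dclo := fun S : {set T} => [set y | [exists x in S, le y x]].
have Hpt : forall S : {set T}, (1 <= \big[Rplus/0%R]_(B in FB) ind [disjoint S & ~: B]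
                        + \big[Rplus/0%R]_(A in FA) ind (A \subset dclo S))%R.
  move=> S.
  have HS : downset le (dclo S).
    move=> x y Hyx; rewrite !inE => /existsP [z /andP [Hz Hxz]].
    by apply/existsP; exists z; rewrite Hz (Htrans _ _ _ Hyx Hxz).
  have H0B : (0 <= \big[Rplus/0%R]_(B in FB) ind [disjoint S & ~: B])%R.
    by apply: sum_ge0 => *; apply: ind_ge0.
  have H0A : (0 <= \big[Rplus/0%R]_(A in FA) ind (A \subset dclo S))%R.
    by apply: sum_ge0 => *; apply: ind_ge0.
  case: (Hdual _ HS) => [[B HB Hsub]|[A HA Hsub]].
    have HSB : [disjoint S & ~: B].
      rewrite -subsets_disjoint; apply: subset_trans Hsub.
      by apply/subsetP => z Hz; rewrite inE; apply/existsP; exists z; rewrite Hz Hrefl.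
    have : (1 <= \big[Rplus/0%R]_(B in FB) ind [disjoint S & ~: B])%R.
      by apply: (sum_ge1 HB); [rewrite HSB /ind; lra|move=> *; apply: ind_ge0].
    lra.
  have : (1 <= \big[Rplus/0%R]_(A in FA) ind (A \subset dclo S))%R.
    by apply: (sum_ge1 HA); [rewrite Hsub /ind; lra|move=> *; apply: ind_ge0].
  lra.
have E1 : Ex p (fun _ : {set T} => 1%R) = 1%R.
  transitivity (Ex p (fun S : {set T} => ind [disjoint S & set0])).
    by apply: Ex_ext => S; rewrite -setI_eq0 setI0 eqxx.
  by rewrite Ex_avoid cards0.
have Hmain := Ex_le Hp Hpt; rewrite E1 Ex_add !Ex_sum in Hmain.
have HBb : (\big[Rplus/0%R]_(B in FB) Ex p (fun S => ind [disjoint S & ~: B])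
    <= rsum FB (fun B => exp (- (INR #|T| - INR #|B|) / INR (mpar le))))%R.
  apply: sum_le => B _; rewrite Ex_avoid.
  have HC : INR #|~: B| = (INR #|T| - INR #|B|)%R.
    by rewrite -(cardsC B) plus_INR; ring.
  apply: Rle_trans (_ : exp (- p) ^ #|~: B| <= _)%R.
    apply: pow_incr; split; first lra.
    by have := exp_ineq1_le (- p); lra.
  rewrite exp_pow HC /p /m; right; f_equal; rewrite /Rdiv; ring.
have HK : forall a, #|[set b | ~~ [disjoint upp le a & upp le b]]| <= m * m.
  move=> a.
  apply: leq_trans (_ : #|\bigcup_(c in upp le a) downp le c| <= _).
    apply: subset_leq_card; apply/subsetP => b; rewrite inE -setI_eq0 => /set0Pn [c].
    rewrite !inE => /andP [Hac Hbc].
    by apply/bigcupP; exists c; rewrite ?inE.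
  apply: leq_trans (card_bigcup_le _ _) _.
  apply: leq_trans (_ : \sum_(c in upp le a) m <= _).
    by apply: leq_sum => c _; have := Hmx c; lia.
  rewrite sum_nat_const; have := Hmx a; have := Hdn a; nia.
have HAb : (\big[Rplus/0%R]_(A in FA) Ex p (fun S => ind (A \subset dclo S))
    <= rsum FA (fun A => Rpower (3 / 4) (INR #|A| / INR (mpar le ^ 2))))%R.
  apply: sum_le => A _.
  have Hin : forall a, a \in upp le a by move=> a; rewrite inE Hrefl.
  have [s [Hs1 Hs2 Hs3]] := greedy Hin HK A.
  apply: Rle_trans (_ : Ex p (fun S => ind [disjoint S & set0] *
     \big[Rmult/1%R]_(a <- s) (1 - ind [disjoint S & upp le a])) <= _)%R.
    apply: Ex_le => // S.
    have Hf : forall a, a \in s -> (0 <= 1 - ind [disjoint S & upp le a] <= 1)%R.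
      by move=> a _; case: [disjoint _ & _]; rewrite /ind; lra.
    have H0 : [disjoint S & set0] by rewrite -setI_eq0 setI0 eqxx.
    rewrite H0 /ind Rmult_1_l.
    case HAS: (A \subset dclo S).
      rewrite big1_seq; first lra.
      move=> a /andP [_ Ha].
      have : a \in dclo S by apply: (subsetP HAS); apply: Hs1.
      rewrite inE => /existsP [z /andP [Hz Haz]].
      have -> : [disjoint S & upp le a] = false.
        apply/negbTE/negP => Hd; have := disjointFr Hd Hz; rewrite inE Haz //.
      lra.
    exact: (proj1 (prod_bound Hf)).
  rewrite Ex_blocks //; last by move=> a _; rewrite disjoint_sym -setI_eq0 setI0 eqxx.
  rewrite cards0 /= Rmult_1_l.
  have Hq := q_pow_bound Hm2.
  apply: Rle_trans (_ : (3/4) ^ size s <= _)%R.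
    apply: (proj2 (prod_bound _)) => a _; split.
      have : ((1 - p) ^ #|upp le a| <= 1)%R.
        apply: (Rle_trans _ (1 ^ #|upp le a|)); first by apply: pow_incr; lra.
        by rewrite pow1; lra.
      lra.
    have : ((1 - p) ^ (m - 1) <= (1 - p) ^ #|upp le a|)%R.
      apply: pow_anti; first lra.
      have := Hmx a; have := Hdn a; lia.
    rewrite /p in Hq *; lra.
  rewrite -Rpower_pow; last lra.
  rewrite /Rpower; apply: exp_le.
  have HL : (ln (3/4) < 0)%R by rewrite -ln_1; apply: ln_increasing; lra.
  have HM : (0 < INR (mpar le ^ 2))%R by rewrite pow_INR; apply: pow_lt; rewrite -/m; lra.
  have Hd : (INR #|A| / INR (mpar le ^ 2) <= INR (size s))%R.
    have : (INR #|A| <= INR (size s) * INR (mpar le ^ 2))%R.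
      rewrite -mult_INR; apply: le_INR; apply/leP.
      rewrite -/m; apply: leq_trans Hs3 _; rewrite /= ; lia.
    move=> H; apply: (Rmult_le_reg_r (INR (mpar le ^ 2))) => //.
    rewrite /Rdiv Rmult_assoc Rinv_l; lra.
  rewrite [X in (_ <= X)%R]Rmult_comm [X in (X <= _)%R]Rmult_comm.
  by apply: Rmult_le_compat_neg_l; [lra|exact: Hd].
move: Hmain HBb HAb; rewrite /m => H1 H2 H3.
lra.
Qed.
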